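(* Let $G=(V,E)$ be a finite graph and let $M_1,M_2$ be perfect matchings of its dart graph $\mathcal D(G)$. Then the set $(M_1\triangle M_2)\cap E^E_{\mathcal D}$, viewed as a subset of $E$, is a closed curve on $G$.
   Context: A closed curve on $G$ is a subset $C\subseteq E$ such that every vertex of $G$ is incident with an even number of edges of $C$. The dart graph $\mathcal D(G)$ has vertex set $V_{\mathcal D}(G)=\{(v,e)\in V\times E: v\text{ incident with }e\}$, two distinct darts $(v,e),(v',e')$ being adjacent iff $v=v'$ or $e=e'$. $E^E_{\mathcal D}$ is the set of edges of $\mathcal D(G)$ of the form $\{(x,e),(y,e)\}$; it is identified with $E$ via $e\leftrightarrow\{(x,e),(y,e)\}$. A perfect matching of a graph is a set of its edges such that each vertex is incident with exactly one of them. *)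

(* Defs.v *)
(* A finite simple graph G = (V,E): V a finType, E a set of
   2-element subsets of V; vertex v is incident with edge e iff v \in e. *)
From mathcomp Require Import all_boot.
Set Implicit Arguments. Unset Strict Implicit. Unset Printing Implicit Defensive.

Section DartGraph.
Variables (V : finType) (E : {set {set V}}).

Definition simple_graph : Prop := forall e, e \in E -> #|e| = 2.

Definition dart := {p : V * {set V} | (p.2 \in E) && (p.1 \in p.2)}.

Definition dvert (d : dart) : V := (val d).1.
Definition dedge (d : dart) : {set V} := (val d).2.

Definition dart_adj (d d' : dart) : bool :=
  (d != d') && ((dvert d == dvert d') || (dedge d == dedge d')).

Definition dart_edge (f : {set dart}) : bool :=
  [exists d, exists d', dart_adj d d' && (f == [set d; d'])].

Definition dart_perfect_matching (M : {set {set dart}}) : Prop :=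
  (forall f, f \in M -> dart_edge f) /\
  (forall d : dart, #|[set f in M | d \in f]| = 1).

(* the edge {(x,e),(y,e)} of E^E_D corresponding to e *)
Definition EE_edge (e : {set V}) : {set dart} := [set d | dedge d == e].

Definition symdiff_EE (M1 M2 : {set {set dart}}) : {set {set V}} :=
  [set e in E | EE_edge e \in (M1 :\: M2) :|: (M2 :\: M1)].

Definition closed_curve (C : {set {set V}}) : Prop :=
  C \subset E /\ forall v : V, ~~ odd #|[set e in C | v \in e]|.

End DartGraph.

(* Main.v *)
Require Import Defs.
From mathcomp Require Import all_boot.
Set Implicit Arguments. Unset Strict Implicit. Unset Printing Implicit Defensive.

Lemma sum_in_card (I : finType) (A B : {set I}) :
  \sum_(x in A) ((x \in B) : nat) = #|A :&: B|.
Proof.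
rewrite -sum1_card big_mkcond /= [RHS]big_mkcond /=.
by apply: eq_bigr => x _; rewrite inE; case: (x \in A); case: (x \in B).
Qed.

Lemma sum_pred_card (I : finType) (A : {set I}) (P : pred I) :
  \sum_(x in A) ((P x) : nat) = #|[set x in A | P x]|.
Proof.
rewrite -sum1_card big_mkcond /= [RHS]big_mkcond /=.
by apply: eq_bigr => x _; rewrite inE; case: (x \in A); case: (P x).
Qed.

Lemma odd_sum_card (I : finType) (A : {set I}) (F : I -> nat) :
  odd (\sum_(i in A) F i) = odd #|A :&: [set i | odd (F i)]|.
Proof.
rewrite (eq_bigr (fun i => odd (F i) + (F i)./2.*2)); last first.
  by move=> i _; rewrite odd_double_half.
rewrite big_split /= oddD.
have -> : \sum_(i in A) (F i)./2.*2 = (\sum_(i in A) (F i)./2).*2.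
  by rewrite (big_morph double doubleD (erefl 0%N : 0.*2 = 0)).
rewrite odd_double addbF -sum_in_card.
congr odd; apply: eq_bigr => i _; by rewrite inE.
Qed.

Lemma card_pairI (T : finType) (a b : T) (A : {set T}) : a != b ->
  #|[set a; b] :&: A| = (a \in A) + (b \in A).
Proof.
move=> ab; rewrite setIUl cardsU.
have -> : [set a] :&: A :&: ([set b] :&: A) = set0.
  apply/setP => x; rewrite !inE; case: (eqVneq x a) => [->|] //=.
  by rewrite (negPf ab) !andbF.
rewrite cards0 subn0.
have H : forall c, #|[set c] :&: A| = (c \in A).
  move=> c; case: (boolP (c \in A)) => hc.
    have -> : [set c] :&: A = [set c].
      by apply/setP => x; rewrite !inE; case: (eqVneq x c) => [->|].
    by rewrite cards1.
  have -> : [set c] :&: A = set0.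
    by apply/setP => x; rewrite !inE; case: (eqVneq x c) => [->|]; rewrite ?(negPf hc).
  by rewrite cards0.
by rewrite !H.
Qed.

Section Aux.
Variables (V : finType) (E : {set {set V}}).
Hypothesis hG : simple_graph E.

Lemma dartP (d : dart E) : (dedge d \in E) /\ (dvert d \in dedge d).
Proof. by case/andP: (valP d). Qed.

Lemma dart_eq (d d' : dart E) : dvert d = dvert d' -> dedge d = dedge d' -> d = d'.
Proof.
move=> h1 h2; apply: val_inj.
rewrite /dvert /dedge in h1 h2.
by move: h1 h2; case: (val d) => a b; case: (val d') => a' b' /= -> ->.
Qed.

Lemma two_darts (d d' : dart E) : dedge d = dedge d' -> dvert d != dvert d' ->
  forall x, dedge x = dedge d -> x = d \/ x = d'.
Proof.
move=> he hne x hx.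
have [hE hd] := dartP d. have [_ hd'] := dartP d'. rewrite -he in hd'.
have hx' := (dartP x).2. rewrite hx in hx'.
have esub : [set dvert d; dvert d'] \subset dedge d.
  by apply/subsetP => y; rewrite !inE => /orP[]/eqP->.
have eeq : [set dvert d; dvert d'] = dedge d.
  by apply/eqP; rewrite eqEcard esub (hG hE) cards2 hne.
rewrite -eeq !inE in hx'.
by case/orP: hx' => /eqP h; [left|right]; apply: dart_eq => //; rewrite hx.
Qed.

Lemma key (M : {set {set dart E}}) (hM : dart_perfect_matching M) v :
  odd #|[set e in E | (v \in e) && (EE_edge E e \in M)]|
  = odd #|[set d : dart E | dvert d == v]|.
Proof.
set Dv := [set d : dart E | dvert d == v].
set S := [set e in E | (v \in e) && (EE_edge E e \in M)].
have h1 : #|Dv| = \sum_(f in M) #|f :&: Dv|.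
  rewrite -sum1_card.
  transitivity (\sum_(d in Dv) \sum_(f in M) ((d \in f) : nat)).
    apply: eq_bigr => d _; rewrite (sum_pred_card M (fun f => d \in f)) -(hM.2 d).
    by [].
  rewrite exchange_big /=; apply: eq_bigr => f _.
  rewrite (sum_pred_card Dv (fun d => d \in f)).
  by apply: eq_card => x; rewrite !inE andbC.
rewrite h1 odd_sum_card.
have hS : M :&: [set f | odd #|f :&: Dv|] = EE_edge E @: S.
  apply/setP => f; apply/idP/idP.
  - rewrite !inE => /andP[fM hodd].
    case/existsP: (hM.1 f fM) => d /existsP [d' /andP [/andP [hne hor] /eqP hf]].
    rewrite hf card_pairI // !inE in hodd.
    case/orP: hor => [/eqP hv | /eqP he].
      by rewrite hv addnn odd_double in hodd.
    have hvne : dvert d != dvert d'.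
      by apply: contra hne => /eqP hv; apply/eqP; apply: dart_eq.
    have hfe : f = EE_edge E (dedge d).
      rewrite hf; apply/setP => x; rewrite !inE; apply/idP/idP.
        by case/orP => /eqP ->; rewrite ?he.
      by move=> /eqP hx; case: (two_darts he hvne hx) => ->; rewrite eqxx ?orbT.
    apply/imsetP; exists (dedge d) => //.
    rewrite !inE (dartP d).1 -hfe fM andbT /=.
    have [_ h2] := dartP d; have [_ h3] := dartP d'.
    move: hodd; case: (eqVneq (dvert d) v) => [<- //|_].
    case: (eqVneq (dvert d') v) => [<- _|//].
    by rewrite he.
  - case/imsetP => e; rewrite !inE => /andP [hE /andP [hv hm]] ->.
    rewrite hm /=.
    case/existsP: (hM.1 _ hm) => d /existsP [d' /andP [/andP [hne hor] /eqP hf]].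
    have hd : dedge d = e.
      have : d \in [set d; d'] by rewrite !inE eqxx.
      by rewrite -hf inE => /eqP.
    have hd' : dedge d' = e.
      have : d' \in [set d; d'] by rewrite !inE eqxx orbT.
      by rewrite -hf inE => /eqP.
    have hvne : dvert d != dvert d'.
      by apply: contra hne => /eqP hv'; apply/eqP; apply: dart_eq => //; rewrite hd hd'.
    rewrite hf card_pairI // !inE.
    have hx0 : (e \in E) && (v \in e) by rewrite hE hv.
    pose x0 : dart E := Sub (v, e) hx0.
    have hx0e : dedge x0 = e by [].
    have hx0v : dvert x0 = v by [].
    rewrite -hd in hx0e.
    case: (two_darts (etrans hd (esym hd')) hvne hx0e) => hx;
      rewrite -hx hx0v eqxx in hvne *.
      by rewrite eq_sym (negPf hvne).
    by rewrite (negPf hvne).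
rewrite hS card_in_imset //.
move=> e1 e2; rewrite !inE => /andP [hE /andP [hv _]] _ heq.
have hx0 : (e1 \in E) && (v \in e1) by rewrite hE hv.
pose x0 : dart E := Sub (v, e1) hx0.
have : x0 \in EE_edge E e1 by rewrite inE.
by rewrite heq inE => /eqP.
Qed.

End Aux.

Theorem proposition2p5 (V : finType) (E : {set {set V}})
  (hG : simple_graph E) (M1 M2 : {set {set dart E}})
  (hM1 : dart_perfect_matching M1) (hM2 : dart_perfect_matching M2) :
  closed_curve E (symdiff_EE M1 M2).
Proof.
split.
  by apply/subsetP => e; rewrite inE => /andP[].
move=> v.
set S1 := [set e in E | (v \in e) && (EE_edge E e \in M1)].
set S2 := [set e in E | (v \in e) && (EE_edge E e \in M2)].
have k1 := key hG hM1 v. have k2 := key hG hM2 v.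
rewrite -/S1 in k1; rewrite -/S2 in k2.
have -> : [set e in symdiff_EE M1 M2 | v \in e] = (S1 :\: S2) :|: (S2 :\: S1).
  apply/setP => e; rewrite !inE.
  by case: (e \in E); case: (v \in e); case: (EE_edge E e \in M1); case: (EE_edge E e \in M2).
rewrite cardsU.
have -> : (S1 :\: S2) :&: (S2 :\: S1) = set0.
  apply/setP => e; rewrite !inE.
  by case: (e \in E); case: (v \in e); case: (EE_edge E e \in M1); case: (EE_edge E e \in M2).
rewrite cards0 subn0.
have c1 := cardsID S2 S1. have c2 := cardsID S1 S2.
rewrite setIC in c2.
have : odd #|S1| = odd #|S2| by rewrite k1 k2.
rewrite -c1 -c2 !oddD.
by case: (odd #|S1 :\: S2|); case: (odd #|S2 :\: S1|); case: (odd _).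
Qed.
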